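(* Let $F \leq F' \leq \hat F$ and $H\leq H'\leq \hat H$ be permutation groups on $\Omega$ with $F\leq H$ and $F'\leq H'$. Suppose that $H\cap F'=F$ and $H'=HF'$. Then $G(F,F')$ is a closed cocompact subgroup of $G(H,H')$. If moreover $F$ acts freely on $\Omega$, then $G(F,F')$ is a cocompact lattice in $G(H,H')$.
   Context: Standing notation. $\Omega$ is a finite set with $d=|\Omega|\geq 3$, $\mathcal{T}_d$ is the $d$-regular tree with vertex set $V$ and set $E$ of non-oriented edges, and $\mathrm{Aut}(\mathcal{T}_d)$ carries the permutation topology. Fix a coloring $c:E\to\Omega$ such that for every vertex $v$ its restriction $c_v$ to the set $E(v)$ of edges containing $v$ is a bijection onto $\Omega$. For $g\in\mathrm{Aut}(\mathcal{T}_d)$ and $v\in V$, the local permutation is $\sigma(g,v)=c_{gv}\circ g_v\circ c_v^{-1}\in\mathrm{Sym}(\Omega)$, where $g_v:E(v)\to E(gv)$ is induced by $g$. For $F\leq\mathrm{Sym}(\Omega)$: $U(F)=\{g:\sigma(g,v)\in F \ \forall v\}$; $G(F)=\{g:\sigma(g,v)\in F \text{ for all but finitely many } v\}$; $\hat F$ is the subgroup of permutations preserving each $F$-orbit. For $F\leq F'\leq\hat F$, $G(F,F')=G(F)\cap U(F')$, endowed with the unique group topology for which the inclusion $U(F)\hookrightarrow G(F,F')$ is continuous and open ($U(F)$ with the topology induced from $\mathrm{Aut}(\mathcal{T}_d)$). *)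

(* Defs.v *)
From HB Require Import structures.
From Stdlib Require List.
From mathcomp Require Import all_boot all_fingroup.
Set Implicit Arguments. Unset Strict Implicit. Unset Printing Implicit Defensive.

Section Tree.
Variable Omega : finType.

(* Concrete model of the d-regular tree T_d (d = #|Omega|) with its legal
   coloring: the Cayley graph of the free product of d copies of Z/2.
   Vertices are reduced words over Omega (no two consecutive equal letters);
   the neighbour of w along the edge of colour a is a::w, or w' if w = a::w'. *)
Definition reduced (w : seq Omega) : bool := sorted (fun a b => a != b) w.

Definition vertex := {w : seq Omega | reduced w}.

Definition nbw (w : seq Omega) (a : Omega) : seq Omega :=
  if w is b :: w' then (if b == a then w' else a :: w) else [:: a].

Lemma nbw_reduced (w : seq Omega) a : reduced w -> reduced (nbw w a).
Proof.
case: w => [|b w] //= H.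
case: eqP => [_|/eqP Hba].
- by move: H; rewrite /reduced /=; case: w => //= c w /andP [].
- by rewrite /reduced /= eq_sym Hba.
Qed.

Definition nb (v : vertex) (a : Omega) : vertex :=
  exist _ (nbw (proj1_sig v) a) (nbw_reduced a (proj2_sig v)).

Definition adj (u v : vertex) : Prop := exists a, v = nb u a.

Definition is_aut (g : vertex -> vertex) : Prop :=
  bijective g /\ forall u v, adj u v <-> adj (g u) (g v).

(* sigma(g,v) lies in F: the local permutation p with
   c_{gv}(g(edge of colour a at v)) = p a belongs to F *)
Definition loc_in (F : {set {perm Omega}}) (g : vertex -> vertex) (v : vertex) : Prop :=
  exists2 p : {perm Omega}, p \in F & forall a, g (nb v a) = nb (g v) (p a).

Definition U (F : {set {perm Omega}}) (g : vertex -> vertex) : Prop :=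
  is_aut g /\ forall v, loc_in F g v.

Definition G (F : {set {perm Omega}}) (g : vertex -> vertex) : Prop :=
  is_aut g /\ exists s : seq vertex, forall v, ~ loc_in F g v -> v \in s.

Definition GG (F F' : {set {perm Omega}}) (g : vertex -> vertex) : Prop :=
  G F g /\ U F' g.

Definition hat (F : {group {perm Omega}}) : {set {perm Omega}} :=
  [set p : {perm Omega} | [forall x, p x \in orbit 'P F x]].

(* The topology on G(F,F'): the group topology in which U(F) (with the
   permutation topology, i.e. pointwise stabilisers of finite vertex sets as
   basic identity neighbourhoods) is an open subgroup. *)
Definition is_open (F F' : {set {perm Omega}}) (O : (vertex -> vertex) -> Prop) : Prop :=
  forall g, O g -> GG F F' g /\
    exists S : seq vertex, forall h, U F h -> (forall v, v \in S -> h v = v) ->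
      O (g \o h).

Definition is_closed (F F' : {set {perm Omega}}) (Gam : (vertex -> vertex) -> Prop) : Prop :=
  is_open F F' (fun g => GG F F' g /\ ~ Gam g).

(* Gam is cocompact in G(F,F'): the coset space G(F,F')/Gam is compact in the
   quotient topology, i.e. every cover of G(F,F') by open sets saturated under
   right multiplication by Gam has a finite subcover. *)
Definition cocompact (F F' : {set {perm Omega}}) (Gam : (vertex -> vertex) -> Prop) : Prop :=
  forall (I : Type) (O : I -> (vertex -> vertex) -> Prop),
    (forall i, is_open F F' (O i)) ->
    (forall i g h, O i g -> Gam h -> O i (g \o h)) ->
    (forall g, GG F F' g -> exists i, O i g) ->
    exists s : list I, forall g, GG F F' g -> exists i, List.In i s /\ O i g.

Definition discrete (F F' : {set {perm Omega}}) (Gam : (vertex -> vertex) -> Prop) : Prop :=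
  forall g, Gam g -> exists O, is_open F F' O /\ O g /\
    forall h, O h -> Gam h -> h =1 g.

Definition cocompact_lattice (F F' : {set {perm Omega}}) (Gam : (vertex -> vertex) -> Prop) : Prop :=
  discrete F F' Gam /\ cocompact F F' Gam.

Definition acts_freely (F : {set {perm Omega}}) : Prop :=
  forall p, p \in F -> forall x, p x = x -> p = 1%g.

End Tree.

(* Main.v *)
Require Import Defs.
From HB Require Import structures.
From mathcomp Require Import all_boot all_fingroup.
From mathcomp Require Import zify.
From Stdlib Require Import FunctionalExtensionality Classical ClassicalEpsilon.
From Stdlib Require List.
Set Implicit Arguments. Unset Strict Implicit. Unset Printing Implicit Defensive.
Local Open Scope group_scope.

Lemma reduced_tail {O : finType} (a : O) w : reduced (a :: w) -> reduced w.
Proof. by move/path_sorted. Qed.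

Lemma nbw_cons {O : finType} (a : O) w : reduced (a :: w) -> nbw w a = a :: w.
Proof.
case: w => [|b w] //=; rewrite /reduced /= => /andP [ab _].
by rewrite eq_sym (negbTE ab).
Qed.

Lemma nbwK {O : finType} (w : seq O) a : reduced w -> nbw (nbw w a) a = w.
Proof.
case: w => [|b w] /=; first by rewrite eqxx.
case: eqP => [-> |/eqP ba] H.
- exact: nbw_cons.
- by rewrite /= eqxx.
Qed.

Lemma size_nbw {O : finType} (w : seq O) a : size (nbw w a) <= (size w).+1.
Proof. by case: w => [|b w] //=; case: eqP => //= _; rewrite ltnW. Qed.

Lemma nbw_inj {O : finType} (w : seq O) a b : nbw w a = nbw w b -> a = b.
Proof.
case: w => [|c w] /=; first by case.
do 2 case: eqP => //.
- by move=> -> ->.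
- by move=> _ _ E; have /= := f_equal size E; lia.
- by move=> _ _ E; have /= := f_equal size E; lia.
- by move=> _ _ [].
Qed.

Definition rt {O : finType} : vertex O := exist _ [::] (erefl true).

Lemma nbK {O : finType} (v : vertex O) a : nb (nb v a) a = v.
Proof. by apply: val_inj; rewrite /= nbwK //; case: v. Qed.


Lemma nb_inj {O : finType} (v : vertex O) a b : nb v a = nb v b -> a = b.
Proof. by move=> /(f_equal val) /= /nbw_inj. Qed.

Lemma val_nb {O : finType} (v : vertex O) a : reduced (a :: val v) -> val (nb v a) = a :: val v.
Proof. by move=> H; rewrite /= nbw_cons. Qed.

Lemma vertex_ind {O : finType} (P : vertex O -> Prop) :
  P rt -> (forall v a, reduced (a :: val v) -> P v -> P (nb v a)) -> forall v, P v.
Proof.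
move=> P0 PS [w Hw]; elim: w Hw => [|a w IH] Hw.
  by have -> : exist _ [::] Hw = (@rt O) by apply: val_inj.
have Hw' := reduced_tail Hw.
have -> : exist _ (a :: w) Hw = nb (exist _ w Hw') a by apply: val_inj; rewrite /= nbw_cons.
by apply: PS => //; apply: IH.
Qed.

Lemma nb_closed_all {O : finType} (R : vertex O -> Prop) x :
  R x -> (forall y c, R y -> R (nb y c)) -> forall y, R y.
Proof.
move=> Rx HR.
have R0 : R rt.
  suff H: forall x, R x -> R rt by apply: H Rx.
  move=> {Rx}x; elim/(@vertex_ind O): x => // v a _ IH Hv; apply: IH.
  by rewrite -(nbK v a); apply: HR.
by elim/(@vertex_ind O) => // v a _ IH; apply: HR.
Qed.

Definition LI {O : finType} (p : vertex O -> {perm O}) (f : vertex O -> vertex O) :=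
  forall v a, f (nb v a) = nb (f v) (p v a).

Lemma LI_cons {O : finType} p (f : vertex O -> vertex O) v a :
  LI p f -> p (nb v a) a = p v a.
Proof.
move=> Hf; apply: (@nb_inj _ (nb (f v) (p v a))).
by rewrite nbK -Hf -Hf nbK.
Qed.

Lemma LI_surj {O : finType} p (f : vertex O -> vertex O) :
  LI p f -> forall y, exists v, f v = y.
Proof.
move=> Hf; apply: (@nb_closed_all _ _ (f rt)); first by exists rt.
move=> y c [v <-]; exists (nb v ((p v)^-1 c)); by rewrite Hf permKV.
Qed.

Fixpoint bw {O : finType} (x0 : vertex O) (q : seq O -> {perm O}) (w : seq O) : vertex O :=
  if w is a :: w' then nb (bw x0 q w') (q w' a) else x0.

Lemma build_LI {O : finType} (x0 : vertex O) (q : seq O -> {perm O}) :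
  (forall a w, reduced (a :: w) -> q (a :: w) a = q w a) ->
  LI (fun v => q (val v)) (fun v => bw x0 q (val v)).
Proof.
move=> Hq [w Hw] c /=.
case: w Hw => [|b w] Hw //=.
case: eqP => [<- | _] //=.
by rewrite Hq // nbK.
Qed.

Lemma build_root {O : finType} (x0 : vertex O) q : bw x0 q (val (@rt O)) = x0.
Proof. by []. Qed.

Fixpoint bwinv {O : finType} (p : vertex O -> {perm O}) (z : vertex O) (w : seq O) : vertex O :=
  if w is a :: w' then let y := bwinv p z w' in nb y ((p y)^-1 a) else z.

Lemma LI_bij {O : finType} p (f : vertex O -> vertex O) :
  LI p f -> exists g, cancel f g /\ cancel g f.
Proof.
move=> Hf.
have [z Hz] := LI_surj Hf rt.
pose q w := (p (bwinv p z w))^-1.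
have E : forall w, bwinv p z w = bw z q w by elim=> //= a w IH; rewrite /q -IH.
have Hq : LI (fun v => q (val v)) (fun v => bwinv p z (val v)).
  move=> v a; rewrite !E; apply: build_LI => b w Hbw.
  rewrite /q /=; set y := bwinv p z w; set e := (p y)^-1 b.
  apply/eqP; rewrite eq_sym -(inj_eq (@perm_inj _ (p (nb y e)))) permKV.
  by rewrite (LI_cons _ _ Hf) /e permKV.
have K : cancel (fun v => bwinv p z (val v)) f.
  elim/(@vertex_ind O) => // v a Hva IH.
  by rewrite val_nb //= Hf IH permKV.
exists (fun v => bwinv p z (val v)); split => // v.
have [y <-] := LI_surj Hq v.
by rewrite K.
Qed.

Lemma LI_aut {O : finType} p (f : vertex O -> vertex O) : LI p f -> is_aut f.
Proof.
move=> Hf; have [g [fK gK]] := LI_bij Hf.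
split; first by exists g.
move=> u v; split => [[a ->] | [c E]]; first by exists (p u a); rewrite Hf.
exists ((p u)^-1 c); apply: (can_inj fK); by rewrite Hf permKV.
Qed.


Definition lp {O : finType} (f : vertex O -> vertex O) (v : vertex O) : {perm O} :=
  odflt 1 [pick p : {perm O} | [forall a, f (nb v a) == nb (f v) (p a)]].

Lemma lp_LI {O : finType} (f : vertex O -> vertex O) :
  (forall v, exists p : {perm O}, forall a, f (nb v a) = nb (f v) (p a)) -> LI (lp f) f.
Proof.
move=> H v a; rewrite /lp; case: pickP => [p /forallP Hp | N] /=; first exact/eqP.
have [p Hp] := H v; have := N p; rewrite (_ : [forall a, _] = true) //.
by apply/forallP => b; rewrite Hp.
Qed.

Lemma LI_uniq {O : finType} p q (f : vertex O -> vertex O) v :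
  LI p f -> LI q f -> p v = q v.
Proof. by move=> Hp Hq; apply/permP => a; apply: (@nb_inj _ (f v)); rewrite -Hp -Hq. Qed.

Lemma loc_inP {O : finType} (A : {set {perm O}}) p f v :
  LI p f -> loc_in A f v <-> p v \in A.
Proof.
move=> Hf; split => [[q qA Hq] | pA]; last by exists (p v).
suff -> : p v = q by [].
by apply/permP => a; apply: (@nb_inj _ (f v)); rewrite -Hf -Hq.
Qed.

Lemma U_LI {O : finType} (A : {set {perm O}}) f :
  U A f -> LI (lp f) f /\ forall v, lp f v \in A.
Proof.
move=> [_ H].
have L : LI (lp f) f by apply: lp_LI => v; have [p _ Hp] := H v; exists p.
by split => // v; rewrite -(loc_inP _ _ L).
Qed.

Lemma LI_U {O : finType} (A : {set {perm O}}) p f :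
  LI p f -> (forall v, p v \in A) -> U A f.
Proof. by move=> L H; split; [exact: LI_aut L | move=> v; rewrite (loc_inP _ _ L)]. Qed.

Lemma G_LI {O : finType} (A : {set {perm O}}) p f :
  LI p f -> G A f <-> exists s : seq (vertex O), forall v, p v \notin A -> v \in s.
Proof.
move=> L; split => [[_ [s Hs]] | [s Hs]].
  by exists s => v /negP Hv; apply: Hs; rewrite (loc_inP _ _ L).
split; first exact: LI_aut L.
by exists s => v Hv; apply: Hs; apply/negP; rewrite -(loc_inP _ _ L).
Qed.

Lemma LI_comp {O : finType} p q (f g : vertex O -> vertex O) :
  LI p f -> LI q g -> LI (fun v => p v * q (f v)) (g \o f).
Proof. by move=> Hf Hg v a; rewrite /= Hf Hg permM. Qed.

Lemma LI_inv {O : finType} p (f g : vertex O -> vertex O) :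
  LI p f -> cancel f g -> cancel g f -> LI (fun v => (p (g v))^-1) g.
Proof.
move=> Hf fK gK v a.
rewrite -{1}(gK v) -{1}(permKV (p (g v)) a) -Hf.
by rewrite fK.
Qed.

Lemma U_comp {O : finType} (A : {group {perm O}}) (f g : vertex O -> vertex O) :
  U A f -> U A g -> U A (g \o f).
Proof.
move=> /U_LI [Lf Af] /U_LI [Lg Ag].
by apply: (LI_U (LI_comp Lf Lg)) => v; rewrite groupM.
Qed.

Lemma U_inv {O : finType} (A : {group {perm O}}) (f g : vertex O -> vertex O) :
  U A f -> cancel f g -> cancel g f -> U A g.
Proof.
move=> /U_LI [Lf Af] fK gK.
by apply: (LI_U (LI_inv Lf fK gK)) => v; rewrite groupV.
Qed.

Lemma U_id {O : finType} (A : {group {perm O}}) : U A (@id (vertex O)).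
Proof. by apply: (@LI_U _ _ (fun _ => 1)) => // v a; rewrite perm1. Qed.

Lemma U_mono {O : finType} (A B : {set {perm O}}) f : A \subset B -> U A f -> U B f.
Proof. by move=> AB [H1 H2]; split => // v; have [p pA Hp] := H2 v; exists p => //; apply: (subsetP AB). Qed.

Lemma G_mono {O : finType} (A B : {set {perm O}}) f : A \subset B -> G A f -> G B f.
Proof.
move=> AB [H1 [s Hs]]; split => //; exists s => v Hv; apply: Hs => [[p pA Hp]].
by apply: Hv; exists p => //; apply: (subsetP AB).
Qed.

Lemma GG_mono {O : finType} (A B A' B' : {set {perm O}}) f :
  A \subset A' -> B \subset B' -> GG A B f -> GG A' B' f.
Proof. by move=> H1 H2 [G1 U1]; split; [apply: G_mono G1 | apply: U_mono U1]. Qed.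

Lemma U_GG {O : finType} (A B : {set {perm O}}) f : A \subset B -> U A f -> GG A B f.
Proof.
move=> AB Uf; have [L H] := U_LI Uf; split; last exact: U_mono Uf.
by rewrite (G_LI _ L); exists [::] => v; rewrite H.
Qed.

Lemma GG_comp {O : finType} (A B : {group {perm O}}) (f g : vertex O -> vertex O) :
  GG A B f -> GG A B g -> GG A B (g \o f).
Proof.
move=> [Gf Uf] [Gg Ug].
have [Lf Bf] := U_LI Uf; have [Lg Bg] := U_LI Ug.
have [fi [fK fiK]] := LI_bij Lf.
have [sf Hsf] := (G_LI _ Lf).1 Gf; have [sg Hsg] := (G_LI _ Lg).1 Gg.
split; last exact: U_comp.
rewrite (G_LI _ (LI_comp Lf Lg)); exists (sf ++ map fi sg) => v Hv.
rewrite mem_cat; case: (boolP (lp f v \in A)) => [fA | /Hsf -> //].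
case: (boolP (lp g (f v) \in A)) => [gA | /Hsg gs].
  by move: Hv; rewrite groupM.
by apply/orP; right; rewrite -(fK v); apply: map_f.
Qed.

Lemma GG_inv {O : finType} (A B : {group {perm O}}) (f g : vertex O -> vertex O) :
  GG A B f -> cancel f g -> cancel g f -> GG A B g.
Proof.
move=> [Gf Uf] fK gK.
have [Lf Bf] := U_LI Uf.
have [sf Hsf] := (G_LI _ Lf).1 Gf.
split; last exact: U_inv Uf fK gK.
rewrite (G_LI _ (LI_inv Lf fK gK)); exists (map f sf) => v Hv.
rewrite -(gK v); apply: map_f; apply: Hsf.
by move: Hv; rewrite groupV.
Qed.


Fixpoint fdec {O : finType} (F' H : {set {perm O}}) (pgw : seq O -> {perm O}) (w : seq O) : {perm O} :=
  match w with
  | [::] => odflt 1 [pick q : {perm O} | (q \in F') && (q^-1 * pgw [::] \in H)]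
  | a :: w' => odflt 1 [pick q : {perm O} | [&& q \in F', q^-1 * pgw (a :: w') \in H & q a == fdec F' H pgw w' a]]
  end.

Lemma decomp {O : finType} (F F' H H' : {group {perm O}}) :
  F \subset F' -> F' \subset hat F -> F \subset H ->
  H :&: F' = F :> {set {perm O}} -> H' = (H * F')%g :> {set {perm O}} ->
  forall g, GG H H' g -> exists k gam, U H k /\ k rt = rt /\ GG F F' gam /\ g = k \o gam.
Proof.
move=> FF' F'h FH HF HH g [Gg Ug].
have [Lg Bg] := U_LI Ug; set pg := lp g in Lg Bg.
have ex0 : forall v, exists q, (q \in F') && (q^-1 * pg v \in H).
  move=> v; have := Bg v; rewrite -groupV HH => /mulsgP [h f hH fF E].
  exists f^-1; rewrite groupV fF /= invgK.
  have -> : pg v = (h * f)^-1 by rewrite -E invgK.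
  by rewrite invMg mulgA mulgV mul1g groupV.
have ex1 : forall v (fw : {perm O}) a, fw \in F' ->
    exists q, [&& q \in F', q^-1 * pg v \in H & q a == fw a].
  move=> v fw a fwF; have [q0 /andP [q0F q0H]] := ex0 v.
  have := subsetP F'h _ q0F; rewrite inE => /forallP /(_ a) /orbitP [f1 f1F E1].
  have := subsetP F'h _ fwF; rewrite inE => /forallP /(_ a) /orbitP [f2 f2F E2].
  exists (q0 * (f1^-1 * f2)); apply/and3P; split.
  - by rewrite groupM // groupM ?groupV // (subsetP FF').
  - rewrite invMg -mulgA groupM // groupV groupM ?groupV //; exact: (subsetP FH).
  - by rewrite !permM -E1 -E2 /= permK.
pose pgw w := pg (insubd rt w).
have pgwE : forall v : vertex O, pgw (val v) = pg v by move=> v; rewrite /pgw valKd.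
pose fd := fdec F' H pgw.
have Inv : forall w, reduced w -> (fd w \in F') && ((fd w)^-1 * pgw w \in H).
  elim => [|a w IH] Hw; rewrite /fd /=; fold fd.
    case: pickP => [q // | N]; have [q Hq] := ex0 (insubd rt [::]); by have := N q; rewrite Hq.
  have [Fw _] := andP (IH (reduced_tail Hw)).
  case: pickP => [q /and3P [-> -> _] // | N].
  have [q Hq] := ex1 (insubd rt (a :: w)) _ a Fw; by have := N q; rewrite Hq.
have Cons : forall a w, reduced (a :: w) -> fd (a :: w) a = fd w a.
  move=> a w Hw; rewrite /fd /=; fold fd.
  have [Fw _] := andP (Inv _ (reduced_tail Hw)).
  case: pickP => [q /and3P [_ _ /eqP] // | N].
  have [q Hq] := ex1 (insubd rt (a :: w)) _ a Fw; by have := N q; rewrite Hq.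
pose g1 := fun v : vertex O => bw rt fd (val v).
have L1 : LI (fun v => fd (val v)) g1 by apply: build_LI.
have Inv' : forall v : vertex O, (fd (val v) \in F') && ((fd (val v))^-1 * pg v \in H).
  by move=> v; rewrite -pgwE; apply: Inv; case: v.
have [g1i [g1K g1iK]] := LI_bij L1.
have GG1 : GG F F' g1.
  have [s Hs] := (G_LI _ Lg).1 Gg.
  split; last by apply: (LI_U L1) => v; case/andP: (Inv' v).
  rewrite (G_LI _ L1); exists s => v Hv; apply: Hs; apply: contra Hv => pH.
  case/andP: (Inv' v) => qF qH.
  rewrite -HF inE qF andbT -groupV.
  by rewrite -(mulgK (pg v) (fd (val v))^-1) groupM ?groupV.
pose u := g \o g1i.
have Lu := LI_comp (LI_inv L1 g1K g1iK) Lg.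
have Uu : U H u.
  by apply: (LI_U Lu) => v; case/andP: (Inv' (g1i v)).
have [ui [uK uiK]] := LI_bij Lu.
pose t := fun v : vertex O => bw (ui rt) (fun _ => 1) (val v).
have Lt : LI (fun v => (fun _ => 1) (val v)) t by apply: build_LI.
have [ti [tK tiK]] := LI_bij Lt.
have Ut : forall A : {group {perm O}}, U A t by move=> A; apply: (LI_U Lt) => v; rewrite group1.
exists (u \o t), (ti \o g1); split; first exact: U_comp.
split.
  rewrite /= /t build_root; exact: uiK.
split.
  apply: GG_comp => //; apply: U_GG => //; exact: U_inv (Ut F) tK tiK.
apply: functional_extensionality => x /=.
by rewrite tiK /u /= g1K.
Qed.


Fixpoint ball {Om : finType} (n : nat) : seq (seq Om) :=
  if n is m.+1 then [::] :: [seq a :: w | a <- enum Om, w <- ball m] else [:: [::]].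

Lemma mem_ball {Om : finType} n (w : seq Om) : size w <= n -> w \in ball n.
Proof.
elim: n w => [|n IH] [|a w] //= Hw.
by rewrite in_cons /=; apply: allpairs_f; rewrite ?mem_enum //; apply: IH.
Qed.

Lemma ball_size {Om : finType} n (w : seq Om) : w \in ball n -> size w <= n.
Proof.
elim: n w => [|n IH] w /=; first by rewrite inE => /eqP ->.
rewrite in_cons => /orP [/eqP -> // | /allpairsP [[a w'] [_ /= Hw' ->]]].
by rewrite /= ltnS IH.
Qed.

Fixpoint allseq {T : Type} (L : seq T) (m : nat) : seq (seq T) :=
  if m is m'.+1 then [seq x :: s | x <- L, s <- allseq L m'] else [:: [::]].

Lemma mem_allseq {T : eqType} (L : seq T) s : all (mem L) s -> s \in allseq L (size s).
Proof.
elim: s => [|x s IH] //= /andP [xL sL].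
by apply: allpairs_f => //; apply: IH.
Qed.

Lemma LI_size {Om : finType} p (k : vertex Om -> vertex Om) :
  LI p k -> k rt = rt -> forall v, size (val (k v)) <= size (val v).
Proof.
move=> L k0; elim/(@vertex_ind Om); first by rewrite k0.
move=> v a Hva IH; rewrite L (val_nb Hva) /=.
by apply: leq_trans (size_nbw (val (k v)) (p v a)) _; rewrite ltnS.
Qed.


Lemma compactK {Om : finType} (H : {group {perm Om}}) (I : Type)
  (Oi : I -> (vertex Om -> vertex Om) -> Prop) :
  (forall i k, Oi i k -> exists S : seq (vertex Om), forall h, U H h ->
       (forall v, v \in S -> h v = v) -> Oi i (k \o h)) ->
  (forall k, U H k -> k rt = rt -> exists i, Oi i k) ->
  exists s : list I, forall k, U H k -> k rt = rt -> exists i, List.In i s /\ Oi i k.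
Proof.
move=> Hopen Hcov.
pose K k := U H k /\ k rt = rt.
pose Good (C : (vertex Om -> vertex Om) -> Prop) :=
  exists s : list I, forall k, C k -> exists i, List.In i s /\ Oi i k.
pose agr n (k k' : vertex Om -> vertex Om) := forall v : vertex Om, size (val v) <= n -> k v = k' v.
pose C n k0 k := K k /\ agr n k k0.
have good_sub : forall (C1 C2 : (vertex Om -> vertex Om) -> Prop),
    (forall k, C1 k -> C2 k) -> Good C2 -> Good C1.
  by move=> C1 C2 S [s Hs]; exists s => k /S /Hs.
have good_union : forall (T : eqType) (L : seq T) pt (C0 : (vertex Om -> vertex Om) -> Prop),
    (forall x, x \in L -> Good (fun k => C0 k /\ pt k = x)) ->
    Good (fun k => C0 k /\ pt k \in L).
  move=> T L pt C0; elim: L => [|x L IH] HL.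
    by exists nil => k [].
  have [s1 Hs1] := HL x (mem_head _ _).
  have [s2 Hs2] : Good (fun k => C0 k /\ pt k \in L).
    by apply: IH => y yL; apply: HL; rewrite in_cons yL orbT.
  exists (s1 ++ s2) => k [Ck]; rewrite in_cons => /orP [/eqP E | E].
    by have [i [Hi Oik]] := Hs1 k (conj Ck E); exists i; split => //; apply: List.in_or_app; left.
  by have [i [Hi Oik]] := Hs2 k (conj Ck E); exists i; split => //; apply: List.in_or_app; right.
pose pat n (k : vertex Om -> vertex Om) := map (fun w => val (k (insubd rt w))) (ball n).
have pat_agr : forall n k k', pat n k = pat n k' -> agr n k k'.
  move=> n k k' E0; rewrite /agr => v Hv; have E := iffRL (eq_in_map _ _ _) E0; apply: val_inj.
  by have := E _ (mem_ball Hv); rewrite /= valKd.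
have pat_mem : forall (n : nat) (k : vertex Om -> vertex Om), K k -> pat n k \in allseq (@ball Om n) (size (@ball Om n)).
  move=> n k Kk; have [Uk k0] : U H k /\ k rt = rt := Kk; have [Lk _] := U_LI Uk.
  rewrite -(size_map (fun w => val (k (insubd rt w)))); apply: mem_allseq.
  apply/allP => x /mapP [w Hw ->]; apply: mem_ball.
  apply: leq_trans (LI_size Lk k0 _) _.
  rewrite val_insubd; case: ifP => _ //; exact: ball_size.
have step : forall n k0, ~ Good (C n k0) ->
    exists k1, K k1 /\ agr n k1 k0 /\ ~ Good (C n.+1 k1).
  move=> n k0 Bad; apply: NNPP => N; apply: Bad.
  apply: (good_sub _ (fun k => C n k0 k /\ pat n.+1 k \in allseq (ball n.+1) (size (ball n.+1)))).
    by move=> k [Kk Ak]; split => //; apply: pat_mem.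
  apply: good_union => x _.
  case: (classic (exists k1, C n k0 k1 /\ pat n.+1 k1 = x)) => [[k1 [[Kk1 A1] P1]] | NE].
    have G1 : Good (C n.+1 k1).
      by apply: NNPP => NG; apply: N; exists k1.
    apply: (good_sub _ _ _ G1) => k [[Kk Ak] Pk]; split => //.
    by apply: pat_agr; rewrite Pk.
  by exists nil => k Hk; exfalso; apply: NE; exists k.
have [GK | BadK] := classic (Good K).
  by case: GK => s Hs; exists s => k Uk k0; apply: Hs; split.
have B0 : K id /\ ~ Good (C 0 id).
  split; first by split => //; apply: U_id.
  move=> [s Hs]; apply: BadK; exists s => k Kk; apply: Hs; split => // v.
  rewrite leqn0 => /nilP E.
  have -> : v = rt by apply: val_inj.
  by case: Kk.
pose Bd n k := K k /\ ~ Good (C n k).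
have stepT : forall n k, Bd n k -> {k1 | Bd n.+1 k1 /\ agr n k1 k}.
  move=> n k [_ Hk]; apply: constructive_indefinite_description.
  have [k1 [K1 [A1 B1]]] := step n k Hk; by exists k1.
pose seqk := nat_rect (fun n => {k | Bd n k}) (exist _ id B0)
  (fun m kk => exist _ (proj1_sig (stepT m _ (proj2_sig kk)))
                       (proj1 (proj2_sig (stepT m _ (proj2_sig kk))))).
pose kn n := proj1_sig (seqk n).
have Bkn : forall n, Bd n (kn n) by move=> n; exact: (proj2_sig (seqk n)).
have Akn : forall n, agr n (kn n.+1) (kn n).
  by move=> n; rewrite /kn /=; exact: (proj2 (proj2_sig (stepT n _ (proj2_sig (seqk n))))).
have Achain : forall d m, agr m (kn (m + d)) (kn m).
  elim => [|d IH] m v Hv; first by rewrite addn0.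
  by rewrite addnS (Akn _ v) ?IH //; apply: leq_trans Hv (leq_addr _ _).
pose kinf v := kn (size (val v)) v.
have Ainf : forall N v, size (val v) <= N -> kinf v = kn N v.
  move=> N v Hv; rewrite /kinf -(subnKC Hv) Achain //.
have Linf : LI (fun v => lp (kn (size (val v)).+1) v) kinf.
  move=> v a.
  have [[Uk _] _] := Bkn (size (val v)).+1.
  have [Lk _] := U_LI Uk.
  rewrite (Ainf (size (val v)).+1) ?size_nbw // (Ainf (size (val v)).+1 v) //.
have Kinf : K kinf.
  split; last by rewrite /kinf /=; have [[_ ->] _] := Bkn 0.
  apply: (LI_U Linf) => v; have [[Uk _] _] := Bkn (size (val v)).+1.
  by have [_ ->] := U_LI Uk.
have [i Hi] := Hcov _ (proj1 Kinf) (proj2 Kinf).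
have [S HS] := Hopen _ _ Hi.
pose N := \max_(v <- S) size (val v).
have [_ BN] := Bkn N; exfalso; apply: BN.
have [ki [kK kiK]] := LI_bij Linf.
exists (i :: nil) => k Ck; exists i; split; first by left.
have [[Uk k0] Ak] : (U H k /\ k rt = rt) /\ agr N k (kn N) := Ck.
have -> : k = kinf \o (ki \o k).
  by apply: functional_extensionality => x /=; rewrite kiK.
apply: HS; first by apply: U_comp Uk (U_inv (proj1 Kinf) kK kiK).
move=> v vS /=.
have vN : size (val v) <= N by rewrite /N; apply: (@leq_bigmax_seq _ S xpredT (fun v => size (val v))) vS _.
by rewrite Ak // -Ainf // kK.
Qed.


Lemma free_id {Om : finType} (F : {set {perm Om}}) p (u : vertex Om -> vertex Om) :
  LI p u -> (forall v, p v \in F) -> acts_freely F -> u rt = rt ->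
  (forall a, u (nb rt a) = nb rt a) -> forall v, u v = v.
Proof.
move=> L pF fr u0 u1.
suff H : forall v, u v = v /\ p v = 1 by move=> v; case: (H v).
elim/(@vertex_ind Om).
  split => //; apply/permP => a; apply: (@nb_inj _ rt).
  by rewrite perm1 -{1}u0 -L u1.
move=> v a _ [IH1 IH2]; split; first by rewrite L IH1 IH2 perm1.
apply: (fr _ (pF _) a); by rewrite (LI_cons _ _ L) IH2 perm1.
Qed.

Lemma fix_nbs {Om : finType} (H : {set {perm Om}}) (h : vertex Om -> vertex Om) v :
  U H h -> h v = v -> (forall a, h (nb v a) = nb v a) -> lp h v = 1.
Proof.
move=> Uh hv ha; have [L _] := U_LI Uh.
apply/permP => a; apply: (@nb_inj _ v).
by rewrite perm1 -{1}hv -L ha.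
Qed.


Theorem mainTheorem10 (Omega : finType) (F F' H H' : {group {perm Omega}}) :
  2 < #|Omega| ->
  F \subset F' -> F' \subset hat F ->
  H \subset H' -> H' \subset hat H ->
  F \subset H -> F' \subset H' ->
  H :&: F' = F :> {set {perm Omega}} ->
  H' = (H * F')%g :> {set {perm Omega}} ->
  ((forall g, GG F F' g -> GG H H' g) /\
   is_closed H H' (GG F F') /\ cocompact H H' (GG F F')) /\
  (acts_freely F -> cocompact_lattice H H' (GG F F')).
Proof.
move=> _ FF' F'h HH' _ FH F'H' HF HH.
have mono : forall g, GG F F' g -> GG H H' g by move=> g; apply: GG_mono.
have dec := decomp FF' F'h FH HF HH.
have cocpt : cocompact H H' (GG F F').
  move=> I Oi Hop Hsat Hcov.
  have [s Hs] := @compactK _ H I Oi (fun i k Hk => (Hop i k Hk).2)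
    (fun k Uk _ => Hcov k (U_GG HH' Uk)).
  exists s => g Gg; have [k [gam [Uk [k0 [Gam ->]]]]] := dec g Gg.
  have [i [Hi Oik]] := Hs k Uk k0; exists i; split => //; exact: Hsat.
split; [split => //; split => // | ].
  move=> g [Gg NG]; split => //.
  have [Lg _] := U_LI (proj2 Gg); have [gi [gK giK]] := LI_bij Lg.
  have Ggi := GG_inv Gg gK giK.
  have [k [gam [Uk [k0 [Gam E]]]]] := dec gi Ggi.
  have [Lk _] := U_LI Uk; have [ki [kK kiK]] := LI_bij Lk.
  have [Lgam _] := U_LI (proj2 Gam); have [gami [gamK gamiK]] := LI_bij Lgam.
  have E1 : forall x, gam (g x) = ki x.
    by move=> x; rewrite -{2}(gK x) E /= kK.
  have E2 : g = gami \o ki.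
    by apply: functional_extensionality => x /=; rewrite -E1 gamK.
  have Uki := U_inv Uk kK kiK.
  have Nki : ~ GG F F' ki.
    by move=> Gki; apply: NG; rewrite E2; apply: GG_comp Gki (GG_inv Gam gamK gamiK).
  have [Lki _] := U_LI Uki.
  have [v Hv] : exists v, lp ki v \notin F.
    apply: NNPP => N; apply: Nki; apply: U_GG FF' _; apply: (LI_U Lki) => v.
    by apply/negPn/negP => Hv; apply: N; exists v.
  exists (v :: map (nb v) (enum Omega)) => h Uh Fh; split.
    exact: GG_comp (U_GG HH' Uh) Gg.
  move=> Gam2.
  have E3 : ki \o h = gam \o (g \o h).
    by apply: functional_extensionality => x /=; rewrite E1.
  have G3 : GG F F' (ki \o h) by rewrite E3; exact: GG_comp Gam2 Gam.
  have [Lh _] := U_LI Uh.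
  have L3 := LI_comp Lh Lki.
  have hv : h v = v by apply: Fh; rewrite mem_head.
  have h1 : lp h v = 1%g.
    apply: fix_nbs Uh hv _ => a; apply: Fh.
    by rewrite in_cons; apply/orP; right; apply: map_f; rewrite mem_enum.
  have P1 : lp h v * lp ki (h v) \in F'.
    by rewrite -(loc_inP _ _ L3); exact: (proj2 (proj2 G3) v).
  have P2 : lp h v * lp ki (h v) \in H.
    by rewrite -(loc_inP _ _ L3); exact: (proj2 (U_comp Uh Uki) v).
  move: Hv; rewrite -HF inE.
  by move: P1 P2; rewrite h1 hv mul1g => -> ->.
move=> fr; split => //.
move=> gam Gam.
pose S0 := rt :: map (nb rt) (enum Omega).
exists (fun g => GG H H' g /\ exists u, U H u /\ (forall x, x \in S0 -> u x = x) /\ g = gam \o u).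
split; last split.
- move=> g [Gg [u [Uu [Fu Eg]]]]; split => //.
  exists S0 => h Uh Fh; split; first exact: GG_comp (U_GG HH' Uh) Gg.
  exists (u \o h); split; first exact: U_comp.
  split; first by move=> x Hx /=; rewrite Fh // Fu.
  by rewrite Eg.
- split; first exact: mono.
  by exists id; split; [exact: U_id | split].
- move=> h [Gh [u [Uu [Fu Eh]]]] Gamh x.
  have [Lgam _] := U_LI (proj2 Gam); have [gami [gamK gamiK]] := LI_bij Lgam.
  have Eu : u = gami \o h.
    by apply: functional_extensionality => y; rewrite Eh /= gamK.
  have Gu : GG F F' u by rewrite Eu; exact: GG_comp Gamh (GG_inv Gam gamK gamiK).
  have [Lu _] := U_LI Uu.
  have uF : forall v, lp u v \in F.
    move=> v; rewrite -HF inE.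
    apply/andP; split; rewrite -(loc_inP _ _ Lu); [exact: (proj2 Uu v) | exact: (proj2 (proj2 Gu) v)].
  rewrite Eh /= (free_id Lu uF fr) //.
    by apply: Fu; rewrite mem_head.
  by move=> a; apply: Fu; rewrite in_cons; apply/orP; right; apply: map_f; rewrite mem_enum.
Qed.
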